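(* Let $k\ge1$ and $D_k=3k^2+3k+1$. Let $\Delta_1,\Delta_2$ be two copies of $T_{D_k}$ compatible with $P_k$ (each being either $c+V(T_{D_k})$ or $c-V(T_{D_k})$ with $c\in P_k$) which share exactly one side and have disjoint interiors. Then the number of points of $P_k$ that are at distance at most $k$ in $T_\infty$ from both $\Delta_1$ and $\Delta_2$ (i.e., counted in the local counts of both copies) is $2k+2$.
   Context: Let $\alpha_1=(1,0)$ and $\alpha_2=(-\tfrac12,\tfrac{\sqrt3}{2})$. The triangular lattice $T_\infty$ is the infinite graph with vertex set $\{a\alpha_1+b\alpha_2 : a,b\in\mathbb Z\}$, two vertices being adjacent iff their Euclidean distance is $1$; distances are graph distances, and the distance from a point to a vertex set is the minimum distance to its elements (zero for points of the set). For $d\ge0$, $V(T_d)=\{a\alpha_1+b\alpha_2 : 0\le b\le a\le d\}$ and $-V(T_d)$ is its point reflection. For $k\ge 1$, let $D_k=3k^2+3k+1$ and let $P_k$ (the pattern $P_{k+1,1}$) be the sublattice $\{x\,u+y\,v : x,y\in\mathbb Z\}$, where $u=(2k+1)\alpha_1+k\alpha_2$ and $v=(k+1)\alpha_1+(2k+1)\alpha_2$. *)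

(* Defs.v *)
From Stdlib Require Import ZArith Reals List.
Open Scope Z_scope.

(* A lattice point (a,b) stands for a*alpha1 + b*alpha2. *)
Definition pt := (Z * Z)%type.

(* Squared Euclidean norm of a*alpha1 + b*alpha2 is a^2 - a b + b^2
   (alpha1.alpha1 = alpha2.alpha2 = 1, alpha1.alpha2 = -1/2). *)
Definition sqnorm (a b : Z) : Z := a * a - a * b + b * b.

Definition adj (p q : pt) : Prop :=
  sqnorm (fst q - fst p) (snd q - snd p) = 1.

Fixpoint within (n : nat) (p q : pt) : Prop :=
  p = q \/ match n with
           | O => False
           | S m => exists r, adj p r /\ within m r q
           end.

Definition Dk (k : nat) : Z := let z := Z.of_nat k in 3 * z * z + 3 * z + 1.

(* The pattern P_k = { x u + y v } with u = (2k+1) alpha1 + k alpha2,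
   v = (k+1) alpha1 + (2k+1) alpha2. *)
Definition inP (k : nat) (p : pt) : Prop :=
  let z := Z.of_nat k in
  exists x y : Z,
    p = (x * (2 * z + 1) + y * (z + 1), x * z + y * (2 * z + 1)).

(* A copy of T_d: base point c and orientation; up = true means c + V(T_d),
   up = false means c - V(T_d). *)
Record tri := Tri { tc : pt ; tup : bool }.

Definition sgn (t : tri) : Z := if tup t then 1 else -1.

Definition inTri (d : Z) (t : tri) (p : pt) : Prop :=
  exists a b : Z, 0 <= b /\ b <= a /\ a <= d /\
    p = (fst (tc t) + sgn t * a, snd (tc t) + sgn t * b).

Definition compatible (k : nat) (t : tri) : Prop := inP k (tc t).

Definition corner (d : Z) (t : tri) (p : pt) : Prop :=
  p = tc t \/
  p = (fst (tc t) + sgn t * d, snd (tc t)) \/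
  p = (fst (tc t) + sgn t * d, snd (tc t) + sgn t * d).

Definition isSide (d : Z) (t : tri) (p q : pt) : Prop :=
  corner d t p /\ corner d t q /\ p <> q.

Definition share_exactly_one_side (d : Z) (t1 t2 : tri) : Prop :=
  (exists p q, isSide d t1 p q /\ isSide d t2 p q) /\
  (forall p q p' q',
      isSide d t1 p q -> isSide d t2 p q ->
      isSide d t1 p' q' -> isSide d t2 p' q' ->
      (p = p' /\ q = q') \/ (p = q' /\ q = p')).

(* Interior of the (real, closed) triangle t of side d: a real point with
   coordinates (x,y) w.r.t. (alpha1, alpha2); writing (a,b) = sgn*((x,y)-c),
   the closed triangle is 0 <= b <= a <= d and its interior 0 < b < a < d. *)
Definition inInterior (d : Z) (t : tri) (x y : R) : Prop :=
  let a := (IZR (sgn t) * (x - IZR (fst (tc t))))%R in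
  let b := (IZR (sgn t) * (y - IZR (snd (tc t))))%R in
  (0 < b /\ b < a /\ a < IZR d)%R.

Definition disjoint_interiors (d : Z) (t1 t2 : tri) : Prop :=
  forall x y : R, ~ (inInterior d t1 x y /\ inInterior d t2 x y).

Definition near (k : nat) (d : Z) (t : tri) (p : pt) : Prop :=
  exists v, inTri d t v /\ within k p v.

(* Main.v *)
Require Import Defs.
From Stdlib Require Import ZArith Reals List Lia.
Open Scope Z_scope.

Definition hdist (a b : Z) : Z := Z.max (Z.abs a) (Z.max (Z.abs b) (Z.abs (a - b))).

Lemma adj_small a b : sqnorm a b = 1 -> hdist a b = 1.
Proof.
  unfold sqnorm; intros H.
  assert (Ha : -1 <= a <= 1) by nia.
  assert (Hb : -1 <= b <= 1) by nia.
  assert (a = -1 \/ a = 0 \/ a = 1) as [ -> | [ -> | -> ] ] by lia;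
  (assert (b = -1 \/ b = 0 \/ b = 1) as [ -> | [ -> | -> ] ] by lia);
  vm_compute in H |- *; first [reflexivity | discriminate H].
Qed.

Lemma hd_le a b n : hdist a b <= n <-> Z.abs a <= n /\ Z.abs b <= n /\ Z.abs (a-b) <= n.
Proof. unfold hdist. rewrite !Z.max_lub_iff. tauto. Qed.

Lemma within_hd n : forall p q, within n p q -> hdist (fst q - fst p) (snd q - snd p) <= Z.of_nat n.
Proof.
  induction n as [|n IH]; intros [p1 p2] [q1 q2] H; cbn [within fst snd] in *.
  - destruct H as [H|[]]. inversion H; subst. unfold hdist. lia.
  - rewrite Nat2Z.inj_succ. destruct H as [H|[[r1 r2] [Ha Hw]]].
    + inversion H; subst. unfold hdist. lia.
    + apply IH in Hw. unfold adj in Ha. apply adj_small in Ha. cbn [fst snd] in *.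
      assert (Ha' : hdist (r1 - p1) (r2 - p2) <= 1) by lia.
      rewrite hd_le in Hw, Ha' |- *. destruct Hw as [W1 [W2 W3]], Ha' as [A1 [A2 A3]].
      split; [|split]; lia.
Qed.

Lemma hd_within n : forall p q, hdist (fst q - fst p) (snd q - snd p) <= Z.of_nat n -> within n p q.
Proof.
  induction n as [|n IH]; intros [p1 p2] [q1 q2] H; cbn [within fst snd] in *; rewrite ?Nat2Z.inj_succ in *.
  - left. unfold hdist in H. f_equal; lia.
  - destruct (Z.eq_dec p1 q1) as [E1|E1]; [destruct (Z.eq_dec p2 q2) as [E2|E2]|].
    + left; subst; reflexivity.
    + right. unfold hdist in H.
      destruct (Z_lt_le_dec p2 q2).
      * exists (p1, p2+1). split. unfold adj, sqnorm; simpl. ring_simplify. lia.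
        apply IH. unfold hdist; simpl. lia.
      * exists (p1, p2-1). split. unfold adj, sqnorm; simpl. ring_simplify. lia.
        apply IH. unfold hdist; simpl. lia.
    + right. unfold hdist in H.
      destruct (Z_lt_le_dec p1 q1); [destruct (Z_lt_le_dec p2 q2)|destruct (Z_lt_le_dec q2 p2)].
      * exists (p1+1, p2+1). split. unfold adj, sqnorm; simpl. ring_simplify. lia.
        apply IH. unfold hdist; simpl. lia.
      * exists (p1+1, p2). split. unfold adj, sqnorm; simpl. ring_simplify. lia.
        apply IH. unfold hdist; simpl. lia.
      * exists (p1-1, p2-1). split. unfold adj, sqnorm; simpl. ring_simplify. lia.
        apply IH. unfold hdist; simpl. lia.
      * exists (p1-1, p2). split. unfold adj, sqnorm; simpl. ring_simplify. lia.
        apply IH. unfold hdist; simpl. lia.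
Qed.

Definition nearUp (k d x y : Z) := -k <= x <= d+k /\ -k <= y <= d+k /\ -k <= x-y <= d+k.

Lemma near_iff k d t p : 0 <= d -> (near k d t p <->
  nearUp (Z.of_nat k) d (sgn t * (fst p - fst (tc t))) (sgn t * (snd p - snd (tc t)))).
Proof.
  intros Hd.
  destruct t as [[c1 c2] [|]]; destruct p as [p1 p2]; unfold near, inTri, sgn, nearUp; cbn [fst snd tc tup];
  split.
  1,3: intros [v [[a [b [H1 [H2 [H3 H4]]]]] Hw]]; subst v; apply within_hd in Hw; cbn [fst snd] in Hw; unfold hdist in Hw; lia.
  - intros H. set (a := Z.min (Z.max (p1 - c1) 0) d). set (b := Z.min (Z.max (p2 - c2) 0) a).
    exists (c1 + 1 * a, c2 + 1 * b). split.
    + exists a, b. subst a b. repeat split; lia.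
    + apply hd_within. unfold hdist; cbn [fst snd]. subst a b. lia.
  - intros H. set (a := Z.min (Z.max (-1 * (p1 - c1)) 0) d). set (b := Z.min (Z.max (-1*(p2 - c2)) 0) a).
    exists (c1 + -1 * a, c2 + -1 * b). split.
    + exists a, b. subst a b. repeat split; lia.
    + apply hd_within. unfold hdist; cbn [fst snd]. subst a b. lia.
Qed.

Lemma coreA_fwd z m n : 1 <= z ->
  let d := 3*z*z+3*z+1 in
  let X := m*(2*z+1)+n*(z+1) in let Y := m*z+n*(2*z+1) in
  nearUp z d X Y -> nearUp z d (-(X - d)) (-(Y - 0)) ->
  exists i, 0 <= i <= z /\ ((m = 2*i /\ n = -i) \/ (m = 2*i+1 /\ n = -i)).
Proof.
  intros Hz d X Y H1 H2. unfold nearUp in *. subst d X Y.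
  set (s := m + 2*n). assert (Hm : m = s - 2*n) by (subst s; lia).
  rewrite Hm in *. clearbody s. clear Hm m.
  assert (s <= 1).
  { destruct (Z_le_gt_dec s 1) as [|Hs]; [assumption|exfalso]. nia. }
  assert (0 <= s).
  { destruct (Z_le_gt_dec 0 s) as [|Hs]; [assumption|exfalso]. nia. }
  assert (s = 0 \/ s = 1) as [->| ->] by lia.
  - exists (-n). assert (n <= 0) by nia. assert (-z <= n) by nia. split; [lia|left; lia].
  - exists (-n). assert (n <= 0) by nia. assert (-z <= n) by nia. split; [lia|right; lia].
Qed.

Lemma coreB_fwd z m n : 1 <= z ->
  let d := 3*z*z+3*z+1 in
  let X := m*(2*z+1)+n*(z+1) in let Y := m*z+n*(2*z+1) in
  nearUp z d X Y -> nearUp z d (-(X - 2*d)) (-(Y - d)) ->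
  exists i, 0 <= i <= z /\ ((m = z+i /\ n = z+1-2*i) \/ (m = z+1+i /\ n = z-2*i)).
Proof.
  intros Hz d X Y H1 H2. unfold nearUp in *. subst d X Y.
  set (s := 2*m + n). assert (Hn : n = s - 2*m) by (subst s; lia).
  rewrite Hn in *. clearbody s. clear Hn n.
  assert (s <= 3*z+2).
  { destruct (Z_le_gt_dec s (3*z+2)) as [|Hs]; [assumption|exfalso]. nia. }
  assert (3*z+1 <= s).
  { destruct (Z_le_gt_dec (3*z+1) s) as [|Hs]; [assumption|exfalso]. nia. }
  assert (s = 3*z+1 \/ s = 3*z+2) as [->| ->] by lia.
  - exists (m-z). assert (z <= m) by nia. assert (m <= 2*z) by nia. split; [lia|left; lia].
  - exists (m-z-1). assert (z+1 <= m) by nia. assert (m <= 2*z+1) by nia. split; [lia|right; lia].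
Qed.

Lemma coreC_fwd z m n : 1 <= z ->
  let d := 3*z*z+3*z+1 in
  let X := m*(2*z+1)+n*(z+1) in let Y := m*z+n*(2*z+1) in
  nearUp z d X Y -> nearUp z d (-(X - d)) (-(Y - d)) ->
  exists i, 0 <= i <= z /\ ((m = i /\ n = i) \/ (m = i /\ n = i+1)).
Proof.
  intros Hz d X Y H1 H2. unfold nearUp in *. subst d X Y.
  set (s := n - m). assert (Hn : n = s + m) by (subst s; lia).
  rewrite Hn in *. clearbody s. clear Hn n.
  assert (s <= 1).
  { destruct (Z_le_gt_dec s 1) as [|Hs]; [assumption|exfalso]. nia. }
  assert (0 <= s).
  { destruct (Z_le_gt_dec 0 s) as [|Hs]; [assumption|exfalso]. nia. }
  assert (s = 0 \/ s = 1) as [->| ->] by lia.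
  - exists m. assert (0 <= m) by nia. assert (m <= z) by nia. split; [lia|left; lia].
  - exists m. assert (0 <= m) by nia. assert (m <= z) by nia. split; [lia|right; lia].
Qed.

Definition ptc (c : pt) (z : Z) (mn : Z * Z) : pt :=
  (fst c + fst mn * (2*z+1) + snd mn * (z+1), snd c + fst mn * z + snd mn * (2*z+1)).

Lemma ptc_inj c z a b : 0 <= z -> ptc c z a = ptc c z b -> a = b.
Proof.
  intros Hz. destruct a as [a1 a2], b as [b1 b2]; unfold ptc; cbn [fst snd].
  intros E. pose proof (f_equal fst E) as E1; pose proof (f_equal snd E) as E2; cbn [fst snd] in E1, E2.
  assert (E1' : (a1-b1)*(2*z+1) + (a2-b2)*(z+1) = 0) by lia.
  assert (E2' : (a1-b1)*z + (a2-b2)*(2*z+1) = 0) by lia.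
  assert (H : (a1-b1)*(3*z*z+3*z+1) = 0).
  { replace ((a1-b1)*(3*z*z+3*z+1)) with ((2*z+1)*((a1-b1)*(2*z+1) + (a2-b2)*(z+1)) - (z+1)*((a1-b1)*z + (a2-b2)*(2*z+1))) by ring.
    rewrite E1', E2'. ring. }
  apply Z.mul_eq_0 in H. destruct H as [H|H]; [|nia].
  assert (a1 = b1) by lia. subst b1. f_equal. nia.
Qed.

Lemma list_lemma k (c : pt) (Q : pt -> Prop) (f g : Z -> Z*Z) :
  inP k c ->
  (forall m n, Q (ptc c (Z.of_nat k) (m,n)) -> exists i, 0<=i<=Z.of_nat k /\ ((m,n) = f i \/ (m,n) = g i)) ->
  (forall i, 0<=i<=Z.of_nat k -> Q (ptc c (Z.of_nat k) (f i)) /\ Q (ptc c (Z.of_nat k) (g i))) ->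
  (forall i j, f i = f j -> i = j) ->
  (forall i j, g i = g j -> i = j) ->
  (forall i j, f i <> g j) ->
  exists L, NoDup L /\ (forall p, In p L <-> inP k p /\ Q p) /\ length L = (2*k+2)%nat.
Proof.
  intros Hc Hfwd Hbwd Hf Hg Hfg.
  assert (Hz : 0 <= (Z.of_nat k)) by (lia).
  exists (map (fun i => ptc c (Z.of_nat k) (f (Z.of_nat i))) (seq 0 (k+1)) ++ map (fun i => ptc c (Z.of_nat k) (g (Z.of_nat i))) (seq 0 (k+1))).
  split; [|split].
  - apply NoDup_app.
    + apply NoDup_map_NoDup_ForallPairs; [|apply seq_NoDup].
      intros a b _ _ E. apply ptc_inj in E; auto. apply Hf in E. lia.
    + apply NoDup_map_NoDup_ForallPairs; [|apply seq_NoDup].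
      intros a b _ _ E. apply ptc_inj in E; auto. apply Hg in E. lia.
    + intros p H1 H2. apply in_map_iff in H1, H2.
      destruct H1 as [a [<- _]], H2 as [b [E _]]. apply ptc_inj in E; auto.
      symmetry in E. exact (Hfg _ _ E).
  - intros p. rewrite in_app_iff, !in_map_iff. split.
    + intros [[i [<- Hi]]|[i [<- Hi]]]; apply in_seq in Hi;
      (split; [|apply Hbwd; lia]).
      * destruct Hc as [x0 [y0 ->]]. unfold ptc. cbn [fst snd].
        exists (x0 + fst (f (Z.of_nat i))), (y0 + snd (f (Z.of_nat i))). f_equal; ring.
      * destruct Hc as [x0 [y0 ->]]. unfold ptc. cbn [fst snd].
        exists (x0 + fst (g (Z.of_nat i))), (y0 + snd (g (Z.of_nat i))). f_equal; ring.
    + intros [[x [y ->]] HQ].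
      destruct Hc as [x0 [y0 Ec]].
      assert (Ep : (x * (2 * (Z.of_nat k) + 1) + y * ((Z.of_nat k) + 1), x * (Z.of_nat k) + y * (2 * (Z.of_nat k) + 1)) = ptc c (Z.of_nat k) (x - x0, y - y0)).
      { rewrite Ec. unfold ptc. cbn [fst snd]. f_equal; ring. }
      rewrite Ep in HQ |- *.
      destruct (Hfwd _ _ HQ) as [i [Hi [E|E]]]; rewrite E; [left|right];
      (exists (Z.to_nat i); rewrite Z2Nat.id by lia; split; [reflexivity| apply in_seq; lia]).
  - rewrite length_app, !length_map, length_seq. lia.
Qed.

Lemma m1l n : -1 * n = - n. Proof. lia. Qed.

Ltac injall := repeat match goal with H : (_,_) = (_,_) |- _ => injection H; clear H; intros end.

Ltac crush Hp1 Hq1 Hp2 Hq2 Hpq :=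
  destruct Hp1 as [Hp1|[Hp1|Hp1]]; destruct Hq1 as [Hq1|[Hq1|Hq1]];
  subst; destruct Hp2 as [Hp2|[Hp2|Hp2]]; destruct Hq2 as [Hq2|[Hq2|Hq2]]; injall;
  first [lia | exfalso; apply Hpq; f_equal; lia].

Lemma config d t1 t2 : 0 < d -> share_exactly_one_side d t1 t2 ->
  (tup t1 = true /\ tup t2 = false /\
    ((fst (tc t2) = fst (tc t1) + d /\ snd (tc t2) = snd (tc t1)) \/
     (fst (tc t2) = fst (tc t1) + 2*d /\ snd (tc t2) = snd (tc t1) + d) \/
     (fst (tc t2) = fst (tc t1) + d /\ snd (tc t2) = snd (tc t1) + d))) \/
  (tup t1 = false /\ tup t2 = true /\
    ((fst (tc t1) = fst (tc t2) + d /\ snd (tc t1) = snd (tc t2)) \/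
     (fst (tc t1) = fst (tc t2) + 2*d /\ snd (tc t1) = snd (tc t2) + d) \/
     (fst (tc t1) = fst (tc t2) + d /\ snd (tc t1) = snd (tc t2) + d))).
Proof.
  intros Hd [[p [q [[Hp1 [Hq1 Hpq]] [Hp2 [Hq2 _]]]]] Huniq].
  destruct t1 as [[a1 b1] [|]]; destruct t2 as [[a2 b2] [|]];
  unfold corner, sgn in *; cbn [fst snd tc tup] in *; rewrite ?Z.mul_1_l, ?m1l in *.
  - exfalso. assert (a1 = a2 /\ b1 = b2) as [<- <-] by crush Hp1 Hq1 Hp2 Hq2 Hpq.
    assert (S1 : isSide d (Tri (a1,b1) true) (a1,b1) (a1 +  d, b1)).
    { unfold isSide, corner, sgn; cbn [fst snd tc tup]. split; [left; reflexivity|split; [right; left; f_equal; ring|]].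
      intro E; injall; lia. }
    assert (S2 : isSide d (Tri (a1,b1) true) (a1,b1) (a1 +  d, b1 +  d)).
    { unfold isSide, corner, sgn; cbn [fst snd tc tup]. split; [left; reflexivity|split; [right; right; f_equal; ring|]].
      intro E; injall; lia. }
    destruct (Huniq _ _ _ _ S1 S1 S2 S2) as [[E1 E2]|[E1 E2]]; injall; lia.
  - left. split; [reflexivity|split; [reflexivity|]]. crush Hp1 Hq1 Hp2 Hq2 Hpq.
  - right. split; [reflexivity|split; [reflexivity|]]. crush Hp1 Hq1 Hp2 Hq2 Hpq.
  - exfalso. assert (a1 = a2 /\ b1 = b2) as [<- <-] by crush Hp1 Hq1 Hp2 Hq2 Hpq.
    assert (S1 : isSide d (Tri (a1,b1) false) (a1,b1) (a1 - d, b1)).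
    { unfold isSide, corner, sgn; cbn [fst snd tc tup]. split; [left; reflexivity|split; [right; left; f_equal; ring|]].
      intro E; injall; lia. }
    assert (S2 : isSide d (Tri (a1,b1) false) (a1,b1) (a1 - d, b1 - d)).
    { unfold isSide, corner, sgn; cbn [fst snd tc tup]. split; [left; reflexivity|split; [right; right; f_equal; ring|]].
      intro E; injall; lia. }
    destruct (Huniq _ _ _ _ S1 S1 S2 S2) as [[E1 E2]|[E1 E2]]; injall; lia.
Qed.

Ltac pinj := intros ? ? E; pose proof (f_equal fst E); pose proof (f_equal snd E); cbn [fst snd] in *; lia.

Lemma Dk_pos k : 0 <= Dk k.
Proof. unfold Dk. nia. Qed.

Lemma configA_list k c tu td : (1 <= k)%nat -> inP k c ->
  tc tu = c -> tup tu = true -> tc td = (fst c + Dk k, snd c) -> tup td = false ->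
  exists L, NoDup L /\ (forall p, In p L <-> inP k p /\ (near k (Dk k) tu p /\ near k (Dk k) td p))
    /\ length L = (2*k+2)%nat.
Proof.
  intros Hk Hc E1 E2 E3 E4.
  apply (list_lemma k c (fun p => near k (Dk k) tu p /\ near k (Dk k) td p)
           (fun i => (2*i, -i)) (fun i => (2*i+1, -i))); [exact Hc| | | pinj | pinj | pinj].
  - intros m n [H1 H2]. rewrite near_iff in H1, H2 by apply Dk_pos.
    unfold sgn in *; rewrite E1, E2 in H1; rewrite E3, E4 in H2. unfold ptc, Dk in *; cbn [fst snd] in *.
    destruct (coreA_fwd (Z.of_nat k) m n) as [i [Hi [[-> ->]|[-> ->]]]];
      [lia | unfold nearUp in *; lia | unfold nearUp in *; lia | |];
      exists i; split; auto.
  - intros i Hi. rewrite !near_iff by apply Dk_pos.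
    unfold sgn; rewrite E1, E2, E3, E4. unfold ptc, Dk, nearUp; cbn [fst snd].
    split; nia.
Qed.

Lemma configB_list k c tu td : (1 <= k)%nat -> inP k c ->
  tc tu = c -> tup tu = true -> tc td = (fst c + 2 * Dk k, snd c + Dk k) -> tup td = false ->
  exists L, NoDup L /\ (forall p, In p L <-> inP k p /\ (near k (Dk k) tu p /\ near k (Dk k) td p))
    /\ length L = (2*k+2)%nat.
Proof.
  intros Hk Hc E1 E2 E3 E4.
  apply (list_lemma k c (fun p => near k (Dk k) tu p /\ near k (Dk k) td p)
           (fun i => (Z.of_nat k + i, Z.of_nat k + 1 - 2*i)) (fun i => (Z.of_nat k + 1 + i, Z.of_nat k - 2*i)));
    [exact Hc| | | pinj | pinj | pinj].
  - intros m n [H1 H2]. rewrite near_iff in H1, H2 by apply Dk_pos.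
    unfold sgn in *; rewrite E1, E2 in H1; rewrite E3, E4 in H2. unfold ptc, Dk in *; cbn [fst snd] in *.
    destruct (coreB_fwd (Z.of_nat k) m n) as [i [Hi [[-> ->]|[-> ->]]]];
      [lia | unfold nearUp in *; lia | unfold nearUp in *; lia | |];
      exists i; split; auto.
  - intros i Hi. rewrite !near_iff by apply Dk_pos.
    unfold sgn; rewrite E1, E2, E3, E4. unfold ptc, Dk, nearUp; cbn [fst snd].
    split; nia.
Qed.

Lemma configC_list k c tu td : (1 <= k)%nat -> inP k c ->
  tc tu = c -> tup tu = true -> tc td = (fst c + Dk k, snd c + Dk k) -> tup td = false ->
  exists L, NoDup L /\ (forall p, In p L <-> inP k p /\ (near k (Dk k) tu p /\ near k (Dk k) td p))
    /\ length L = (2*k+2)%nat.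
Proof.
  intros Hk Hc E1 E2 E3 E4.
  apply (list_lemma k c (fun p => near k (Dk k) tu p /\ near k (Dk k) td p)
           (fun i => (i, i)) (fun i => (i, i+1)));
    [exact Hc| | | pinj | pinj | pinj].
  - intros m n [H1 H2]. rewrite near_iff in H1, H2 by apply Dk_pos.
    unfold sgn in *; rewrite E1, E2 in H1; rewrite E3, E4 in H2. unfold ptc, Dk in *; cbn [fst snd] in *.
    destruct (coreC_fwd (Z.of_nat k) m n) as [i [Hi [[-> ->]|[-> ->]]]];
      [lia | unfold nearUp in *; lia | unfold nearUp in *; lia | |];
      exists i; split; auto.
  - intros i Hi. rewrite !near_iff by apply Dk_pos.
    unfold sgn; rewrite E1, E2, E3, E4. unfold ptc, Dk, nearUp; cbn [fst snd].
    split; nia.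
Qed.
Close Scope Z_scope.

Theorem lemma2 (k : nat) (t1 t2 : tri) :
  (1 <= k)%nat ->
  compatible k t1 -> compatible k t2 ->
  share_exactly_one_side (Dk k) t1 t2 ->
  disjoint_interiors (Dk k) t1 t2 ->
  exists L : list pt,
    NoDup L /\
    (forall p, In p L <-> (inP k p /\ near k (Dk k) t1 p /\ near k (Dk k) t2 p)) /\
    length L = (2 * k + 2)%nat.
Proof.
  intros Hk H1 H2 Hs _. unfold compatible in *.
  assert (Hd : (0 < Dk k)%Z) by (unfold Dk; nia).
  destruct (config (Dk k) t1 t2 Hd Hs) as [[U1 [U2 C]]|[U1 [U2 C]]].
  - destruct C as [[Ea Eb]|[[Ea Eb]|[Ea Eb]]].
    + apply (configA_list k (tc t1)); auto. rewrite <- Ea, <- Eb; apply surjective_pairing.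
    + apply (configB_list k (tc t1)); auto. rewrite <- Ea, <- Eb; apply surjective_pairing.
    + apply (configC_list k (tc t1)); auto. rewrite <- Ea, <- Eb; apply surjective_pairing.
  - assert (exists L, NoDup L /\ (forall p, In p L <-> inP k p /\ (near k (Dk k) t2 p /\ near k (Dk k) t1 p))
      /\ length L = (2*k+2)%nat) as [L [HN [HI HL]]].
    { destruct C as [[Ea Eb]|[[Ea Eb]|[Ea Eb]]].
      + apply (configA_list k (tc t2)); auto. rewrite <- Ea, <- Eb; apply surjective_pairing.
      + apply (configB_list k (tc t2)); auto. rewrite <- Ea, <- Eb; apply surjective_pairing.
      + apply (configC_list k (tc t2)); auto. rewrite <- Ea, <- Eb; apply surjective_pairing. }
    exists L. split; [exact HN|split; [|exact HL]]. intros p. rewrite HI. tauto.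
Qed.
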